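(* The set of properties $\{AL, BR, ER, \{1\}\}$ is query-complete, where $AL$ is the set of alternating permutations, $BR$ is the set of permutations $\pi$ with $\pi(1)<\pi(2)$, $ER$ is the set of permutations $\pi$ of length $n$ with $\pi(n-1)<\pi(n)$, and $\{1\}$ is the set containing only the permutation of length 1.
   Context: A permutation $\pi$ of length $n$ is alternating if for every $i\in[2,n-1]$, $\pi(i)$ does not lie between $\pi(i-1)$ and $\pi(i+1)$. An interval of a permutation is a set of contiguous positions whose values form a contiguous set; a permutation of length $n$ is simple if its only intervals have sizes $0,1,n$. Given a permutation $\sigma$ of length $m$ and nonempty permutations $\alpha_1,\dots,\alpha_m$, the inflation $\sigma[\alpha_1,\dots,\alpha_m]$ is the permutation obtained by replacing each entry $\sigma(i)$ by an interval order isomorphic to $\alpha_i$, these intervals being in the relative order given by $\sigma$ (e.g. $2413[1,132,321,12]=479832156$). A property is any set of permutations; $\pi$ satisfies property $P$ if $\pi\in P$. A set $\mathcal{P}$ of properties is query-complete if, for every simple permutation $\sigma$ (of length $m$) and every $P\in\mathcal{P}$, whether $\sigma[\alpha_1,\dots,\alpha_m]$ satisfies $P$ is determined by $\sigma$ together with knowledge of which properties of $\mathcal{P}$ each $\alpha_i$ satisfies. *)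

(* Defs.v *)
From mathcomp Require Import all_boot.
Set Implicit Arguments. Unset Strict Implicit. Unset Printing Implicit Defensive.

(* A permutation of length n is represented in one-line notation as a
   sequence of naturals which is a rearrangement of 0,1,...,n-1
   (values shifted down by one with respect to the paper). *)
Definition is_perm (s : seq nat) : bool := perm_eq s (iota 0 (size s)).

Definition property := seq nat -> bool.
Definition no_prop : property := fun _ => false.

Definition min_seq (t : seq nat) : nat := foldr minn (head 0 t) t.
Definition max_seq (t : seq nat) : nat := foldr maxn 0 t.

Definition is_interval (s : seq nat) (i k : nat) : bool :=
  (i + k <= size s) &&
  (max_seq (take k (drop i s)) - min_seq (take k (drop i s)) == k.-1).

Definition simple (s : seq nat) : bool :=
  is_perm s &&
  all (fun i => all (fun k => is_interval s i k ==> ((k <= 1) || (k == size s)))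
                    (iota 0 (size s).+1))
      (iota 0 (size s).+1).

(* Inflation sigma[alpha_1,...,alpha_m]: the i-th block is alpha_i shifted by
   the total length of the alpha_j with sigma(j) < sigma(i). *)
Definition offset (sigma : seq nat) (alphas : seq (seq nat)) (i : nat) : nat :=
  \sum_(j <- iota 0 (size sigma) | nth 0 sigma j < nth 0 sigma i) size (nth [::] alphas j).

Definition inflation (sigma : seq nat) (alphas : seq (seq nat)) : seq nat :=
  flatten [seq map (addn (offset sigma alphas i)) (nth [::] alphas i)
          | i <- iota 0 (size sigma)].

Definition between (a b c : nat) : bool := ((a < b) && (b < c)) || ((c < b) && (b < a)).

Definition AL : property := fun s =>
  all (fun i => (0 < i) && (i.+1 < size s) ==>
     ~~ between (nth 0 s i.-1) (nth 0 s i) (nth 0 s i.+1)) (iota 0 (size s)).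

Definition BR : property := fun s =>
  (1 < size s) && (nth 0 s 0 < nth 0 s 1).

Definition ER : property := fun s =>
  (1 < size s) && (nth 0 s (size s).-2 < nth 0 s (size s).-1).

Definition ONE : property := fun s => s == [:: 0].

(* Query-completeness of a set Ps of properties: for every simple sigma of
   length m and every P in Ps, membership of sigma[alpha_1..alpha_m] in P is
   determined by sigma and by which properties of Ps each alpha_i satisfies. *)
Definition query_complete (Ps : seq property) : Prop :=
  forall (sigma : seq nat) (alphas betas : seq (seq nat)),
    simple sigma ->
    size alphas = size sigma -> size betas = size sigma ->
    (forall i, i < size sigma ->
       [/\ is_perm (nth [::] alphas i), 0 < size (nth [::] alphas i),
           is_perm (nth [::] betas i), 0 < size (nth [::] betas i) &
           forall q, q < size Ps ->
             nth no_prop Ps q (nth [::] alphas i) = nth no_prop Ps q (nth [::] betas i)]) ->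
    forall p, p < size Ps ->
      nth no_prop Ps p (inflation sigma alphas) = nth no_prop Ps p (inflation sigma betas).

(* Main.v *)
Require Import Defs.
From mathcomp Require Import all_boot.
Set Implicit Arguments. Unset Strict Implicit. Unset Printing Implicit Defensive.

Fixpoint ud (s : seq nat) : seq (bool * bool) :=
  match s with
  | x :: ((y :: _) as t) => (x < y, y < x) :: ud t
  | _ => [::]
  end.

Definition okp (c1 c2 : bool * bool) : bool := ~~ ((c1.1 && c2.1) || (c2.2 && c1.2)).
Definition dd : bool * bool := (false, true).
Definition sm (w : seq (bool*bool)) := (w == [::], head dd w, last dd w, sorted okp w).

Definition comb (a : bool * (bool*bool) * (bool*bool) * bool) (c : bool*bool)
  (b : bool * (bool*bool) * (bool*bool) * bool) :=
  let: (e1, h1, l1, s1) := a in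
  let: (e2, h2, l2, s2) := b in
  (false, (if e1 then c else h1), (if e2 then c else l2),
   (e1 || (s1 && okp l1 c)) && (e2 || (okp c h2 && s2))).

Lemma sm_cat w1 c w2 : sm (w1 ++ c :: w2) = comb (sm w1) c (sm w2).
Proof.
case: w1 => [|x w1]; case: w2 => [|y w2];
  by rewrite /sm /= ?last_cat /= ?cat_path /= ?andbT ?andbA.
Qed.

Lemma ud_cat s t : s != [::] -> t != [::] ->
  ud (s ++ t) = ud s ++ (last 0 s < head 0 t, head 0 t < last 0 s) :: ud t.
Proof.
move=> Hs; case: t => [|y t] // _; elim: s Hs => [|x s IH]; first by [].
move=> _; case: s IH => [|x' s] IH; first by [].
have -> : (x :: x' :: s) ++ y :: t = x :: ((x' :: s) ++ y :: t) by [].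
have -> : ud (x :: ((x' :: s) ++ y :: t)) = (x < x', x' < x) :: ud ((x' :: s) ++ y :: t) by [].
by rewrite IH.
Qed.

Lemma ud_map c s : ud (map (addn c) s) = ud s.
Proof.
elim: s => [|x [|y s] IH] //=.
by rewrite /= in IH; rewrite IH !ltn_add2l.
Qed.

Lemma iota1 n : iota 1 n = map S (iota 0 n).
Proof. by have := iotaDl 1 0 n; rewrite addn0 => ->; apply: eq_map => i; rewrite add1n. Qed.

Lemma ALcons x s : AL (x :: s) =
  ((1 < size s) ==> ~~ between x (nth 0 s 0) (nth 0 s 1)) && AL s.
Proof.
rewrite /AL /= iota1 all_map.
case: s => [|y s] //=.
rewrite iota1 all_map /= !ltnS; congr andb.
by rewrite all_map; apply: eq_all => i /=; rewrite !ltnS.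
Qed.

Lemma AL_ud s : AL s = sorted okp (ud s).
Proof.
elim: s => [|x s IH] //; rewrite ALcons IH.
case: s IH => [|y [|z t]] IH //.
Qed.

Lemma BR_ud s : BR s = (head dd (ud s)).1.
Proof. by case: s => [|x [|y t]]. Qed.

Lemma ER_ud s : ER s = (last dd (ud s)).1.
Proof.
elim: s => [|x s IH] //; case: s IH => [|y [|z t]] IH //.
Qed.

Definition inv (c : bool * bool) := c.2 == ~~ c.1.

Lemma inv_eq c c' : inv c -> inv c' -> c.1 = c'.1 -> c = c'.
Proof. by case: c c' => [a b] [a' b'] /eqP /= -> /eqP /= -> ->. Qed.

Lemma ud_inv s : uniq s -> all inv (ud s).
Proof.
elim: s => [|x s IH] //; case: s IH => [|y t] IH //= /andP[xn ut].
rewrite IH // andbT /inv /=.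
have xy : (x != y) = true by apply/idP; apply: contraNneq xn => ->; rewrite inE eqxx.
by move: xy; case: ltngtP => // ->; rewrite eqxx.
Qed.

Lemma inv_head w : all inv w -> inv (head dd w).
Proof. by case: w => [|c w] //= /andP[]. Qed.

Lemma inv_last w : all inv w -> inv (last dd w).
Proof.
move=> H; have : all inv (dd :: w) by rewrite /= H.
by move/allP; apply; rewrite mem_last.
Qed.

Lemma ud_nil s : (ud s == [::]) = (size s <= 1).
Proof. by case: s => [|x [|y t]]. Qed.

Lemma perm_lt s x : is_perm s -> x \in s -> x < size s.
Proof. by rewrite /is_perm => /perm_mem ->; rewrite mem_iota. Qed.

Lemma one_size s : is_perm s -> 0 < size s -> ONE s = (size s <= 1).
Proof.
rewrite /ONE; case: s => [|x [|y t]] // Hp _.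
have := perm_lt Hp (mem_head x [::]); by case: x {Hp}.
by rewrite /=; apply/negbTE; apply/eqP.
Qed.

Lemma perm_uniq' s : is_perm s -> uniq s.
Proof. by rewrite /is_perm => /perm_uniq ->; rewrite iota_uniq. Qed.

Lemma sm_ud_eq s t : is_perm s -> 0 < size s -> is_perm t -> 0 < size t ->
  AL s = AL t -> BR s = BR t -> ER s = ER t -> ONE s = ONE t ->
  sm (ud s) = sm (ud t).
Proof.
move=> ps ss pt st eA eB eE eO.
have is_ := ud_inv (perm_uniq' ps); have it := ud_inv (perm_uniq' pt).
rewrite /sm !ud_nil -(one_size ps ss) -(one_size pt st) eO -!AL_ud eA.
rewrite (@inv_eq (head dd (ud s)) (head dd (ud t))) ?inv_head // -?BR_ud //.
by rewrite (@inv_eq (last dd (ud s)) (last dd (ud t))) ?inv_last // -?ER_ud.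
Qed.

Lemma off_lt (sg : seq nat) (als : seq (seq nat)) i j : i < size sg ->
  nth 0 sg i < nth 0 sg j ->
  offset sg als i + size (nth [::] als i) <= offset sg als j.
Proof.
rewrite /offset => ilt lt.
rewrite [X in _ <= X](bigID (fun k => nth 0 sg k < nth 0 sg i)) /= leq_add //.
  apply/eq_leq/esym/eq_bigl => k.
  by rewrite andb_idl // => h; apply: ltn_trans h lt.
rewrite big_mkcond (bigD1_seq i) /= ?mem_iota ?iota_uniq //= ?lt ?ltnn //.
exact: leq_addr.
Qed.

Lemma last_add c s : s != [::] -> last 0 (map (addn c) s) = c + last 0 s.
Proof. by case: s => [|y s] //= _; rewrite last_map. Qed.

Lemma last_in s : s != [::] -> last 0 s \in s.
Proof. by case: s => [|y s] //= _; rewrite mem_last. Qed.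

Lemma head_in s : s != [::] -> head 0 s \in s.
Proof. by case: s => [|y s] //= _; rewrite mem_head. Qed.

Lemma lt_blocks (sg : seq nat) (als : seq (seq nat)) i j x y :
  i < size sg -> j < size sg ->
  (forall k, k < size sg -> is_perm (nth [::] als k) /\ 0 < size (nth [::] als k)) ->
  nth 0 sg i < nth 0 sg j ->
  x \in map (addn (offset sg als i)) (nth [::] als i) ->
  y \in map (addn (offset sg als j)) (nth [::] als j) -> x < y.
Proof.
move=> il jl H lt /mapP[x' xi ->] /mapP[y' yj ->]; have [pi si] := H i il.
apply: (@leq_trans (offset sg als j)); last exact: leq_addr.
apply: (leq_trans _ (off_lt als il lt)).
by rewrite ltn_add2l perm_lt.
Qed.

Lemma ne_map c s : 0 < size s -> map (addn c) s != [::].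
Proof. by case: s. Qed.

Lemma junc (sg : seq nat) (als : seq (seq nat)) i : is_perm sg -> i.+1 < size sg ->
  (forall k, k < size sg -> is_perm (nth [::] als k) /\ 0 < size (nth [::] als k)) ->
  let f := fun k => map (addn (offset sg als k)) (nth [::] als k) in
  (last 0 (f i) < head 0 (f i.+1), head 0 (f i.+1) < last 0 (f i)) =
  (nth 0 sg i < nth 0 sg i.+1, nth 0 sg i.+1 < nth 0 sg i).
Proof.
move=> ps il H f; have il' : i < size sg by apply: ltnW.
have l1 : last 0 (f i) \in f i by apply/last_in/ne_map; case: (H i il').
have h1 : head 0 (f i.+1) \in f i.+1 by apply/head_in/ne_map; case: (H i.+1 il).
case: (ltngtP (nth 0 sg i) (nth 0 sg i.+1)) => h.
- have l := lt_blocks il' il H h l1 h1.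
  by rewrite l ltnNge ltnW.
- have l := lt_blocks il il' H h h1 l1.
  by rewrite l ltnNge ltnW.
- have := nth_uniq 0 il' il (perm_uniq' ps).
  by rewrite h eqxx (ltn_eqF (ltnSn i)).
Qed.

Lemma flat_sm (f g : nat -> seq nat) a n :
 (forall i, a <= i < a + n -> [/\ f i != [::], g i != [::] & sm (ud (f i)) = sm (ud (g i))]) ->
 (forall i, a <= i -> i.+1 < a + n ->
    (last 0 (f i) < head 0 (f i.+1), head 0 (f i.+1) < last 0 (f i)) =
    (last 0 (g i) < head 0 (g i.+1), head 0 (g i.+1) < last 0 (g i))) ->
 sm (ud (flatten (map f (iota a n)))) = sm (ud (flatten (map g (iota a n)))).
Proof.
elim: n a => [|n IH] a Hb Hj; first by [].
have aa : a <= a < a + n.+1 by rewrite leqnn addnS ltnS leq_addr.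
have [fa ga ea] := Hb a aa.
case: n IH Hb Hj aa => [|n] IH Hb Hj aa.
  by rewrite /= !cats0.
have a1 : a <= a.+1 < a + n.+2 by rewrite leqnSn !addnS !ltnS leq_addr.
have [fa1 ga1 _] := Hb a.+1 a1.
have E (h : nat -> seq nat) : flatten (map h (iota a n.+2)) =
   h a ++ (h a.+1 ++ flatten (map h (iota a.+2 n))) by [].
have E1 (h : nat -> seq nat) : flatten (map h (iota a.+1 n.+1)) =
   h a.+1 ++ flatten (map h (iota a.+2 n)) by [].
have NE (h : nat -> seq nat) : h a.+1 != [::] ->
  h a.+1 ++ flatten (map h (iota a.+2 n)) != [::] by case: (h a.+1).
have HE (h : nat -> seq nat) : h a.+1 != [::] ->
  head 0 (h a.+1 ++ flatten (map h (iota a.+2 n))) = head 0 (h a.+1)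
  by case: (h a.+1).
rewrite !E (ud_cat (s := f a)) ?NE // (ud_cat (s := g a)) ?NE // !HE // !sm_cat ea Hj ?leqnn ?addnS ?ltnS ?leq_addr //.
rewrite -!E1 (IH a.+1) //.
- move=> i /andP[ai ia]; apply: Hb; rewrite (ltnW ai) /=.
  by rewrite addnS -addSn.
- move=> i ai ia; apply: Hj; first exact: ltnW.
  by rewrite addnS -addSn.
Qed.

Lemma inf1 (sg : seq nat) (als : seq (seq nat)) : size sg = 1 ->
  inflation sg als = nth [::] als 0.
Proof.
case: sg => [|x [|y t]] //= _.
rewrite /inflation /offset /= big_cons big_nil ltnn cats0.
by rewrite (eq_map (g := id)) ?map_id // => z; rewrite add0n.
Qed.

Lemma inf_not1 (sg : seq nat) (als : seq (seq nat)) : size sg != 1 ->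
  (forall k, k < size sg -> 0 < size (nth [::] als k)) ->
  ONE (inflation sg als) = false.
Proof.
rewrite /inflation /ONE; case: sg => [|x [|y t]] //= _ H.
apply/negbTE/eqP => E; have := congr1 size E; rewrite /= !size_cat.
have := H 0 isT; have := H 1 isT; rewrite !size_map.
case: (size (nth [::] als 0)) => [|u] //; case: (size (nth [::] als 1)) => [|v] //.
by rewrite addSn addnS.
Qed.

Theorem mainTheorem4 : query_complete [:: AL; BR; ER; ONE].
Proof.
move=> sg als bes Hs Ha Hb H p Hp.
have ps : is_perm sg by case/andP: Hs.
have HA k : k < size sg -> is_perm (nth [::] als k) /\ 0 < size (nth [::] als k).
  by move=> kl; case: (H k kl).
have HB k : k < size sg -> is_perm (nth [::] bes k) /\ 0 < size (nth [::] bes k).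
  by move=> kl; case: (H k kl).
have E : sm (ud (inflation sg als)) = sm (ud (inflation sg bes)).
  rewrite /inflation; apply: flat_sm => [i /andP[_ lt]|i _ lt].
  - rewrite add0n in lt; have [pa sa pb sb Hq] := H i lt.
    split; [exact: ne_map|exact: ne_map|].
    rewrite !ud_map; apply: sm_ud_eq => //.
    + exact: (Hq 0 isT).
    + exact: (Hq 1 isT).
    + exact: (Hq 2 isT).
    + exact: (Hq 3 isT).
  - rewrite add0n in lt.
    by rewrite (junc ps lt HA) (junc ps lt HB).
case: p Hp => [|[|[|[|p]]]] //= _.
- by rewrite !AL_ud; exact: (congr1 (fun x => x.2) E).
- by rewrite !BR_ud; exact: (congr1 (fun x => x.1.1.2.1) E).
- by rewrite !ER_ud; exact: (congr1 (fun x => x.1.2.1) E).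
- case: (eqVneq (size sg) 1) => s1.
  + rewrite !inf1 //; have := H 0; rewrite s1 => /(_ isT) [_ _ _ _ Hq].
    exact: (Hq 3 isT).
  + rewrite !inf_not1 // => k kl; [case: (HB k kl)|case: (HA k kl)] => //.
Qed.
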